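(* Let $(\mathcal{A},\{\eta_n\}_{n\ge1})$ be an $NS_\infty$-algebra. Then $(\mathcal{A},\{\overline{\eta}_n\}_{n\ge1})$ is an $A_\infty$-algebra, where $\overline{\eta}_1(a)=\eta_1([1];a)$ and $\overline{\eta}_n(a_1,\dots,a_n)=\sum_{j=1}^{n+1}\eta_n([j];a_1,\dots,a_n)$ for $n\ge2$.
   Context: Over a field of characteristic $0$. An $A_\infty$-algebra: graded vector space $\mathcal{A}$ with degree $n-2$ maps $\mu_n:\mathcal{A}^{\otimes n}\to\mathcal{A}$ such that for all $k\ge1$ and homogeneous $a_1,\dots,a_k$: $\sum_{m+n=k+1}\sum_{i=1}^m(-1)^{i(n+1)+n(|a_1|+\cdots+|a_{i-1}|)}\mu_m(a_1,\dots,a_{i-1},\mu_n(a_i,\dots,a_{i+n-1}),a_{i+n},\dots,a_k)=0$. Let $C_n=\{[1],\dots,[n]\}$ (formal symbols). $\mathcal{O}(1)=\mathrm{Hom}(\mathbf{k}[C_1]\otimes\mathcal{A},\mathcal{A})$, $\mathcal{O}(n)=\mathrm{Hom}(\mathbf{k}[C_{n+1}]\otimes\mathcal{A}^{\otimes n},\mathcal{A})$ for $n\ge2$ (graded maps); call $C_1$, resp. $C_{n+1}$, the index set of $\mathcal{O}(n)$. For $g\in\mathcal{O}(n)$ write $g([*];-)$ for the sum of $g([j];-)$ over its index set, and set $g([j];-)=0$ if $[j]$ is not in its index set. For $f\in\mathcal{O}(m)$ of degree $m-2$, $g\in\mathcal{O}(n)$ of degree $n-2$, $1\le i\le m$, homogeneous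 $a_1,\dots,a_{m+n-1}$, put $\varepsilon=(-1)^{n(|a_1|+\cdots+|a_{i-1}|)}$ and $\bar g_\ast=g([*];a_i,\dots,a_{i+n-1})$; the (graded) partial composition $f\circ_ig\in\mathcal{O}(m+n-1)$ is $\varepsilon$ times: $f([r];a_1,\dots,a_{i-1},\bar g_*,a_{i+n},\dots)$ if $1\le r\le i-1$; $f([i];a_1,\dots,a_{i-1},g([r-i+1];a_i,\dots,a_{i+n-1}),a_{i+n},\dots)$ if $i\le r\le i+n-1$; $f([r-n+1];\dots,\bar g_*,\dots)$ if $i+n\le r\le m+n-1$; $f([i];\dots,g([n+1];a_i,\dots,a_{i+n-1}),\dots)+f([m+1];\dots,\bar g_*,\dots)$ if $r=m+n$ (for $[r]$ in the index set of $\mathcal{O}(m+n-1)$). An $NS_\infty$-algebra is $(\mathcal{A},\{\eta_n\}_{n\ge1})$ with $\eta_n\in\mathcal{O}(n)$ of degree $n-2$ such that for every $k\ge1$, every $[r]$ in the index set of $\mathcal{O}(k)$ and homogeneous $a_1,\dots,a_k$: $\sum_{m+n=k+1}\sum_{i=1}^m(-1)^{i(n+1)}(\eta_m\circ_i\eta_n)([r];a_1,\dots,a_k)=0$. *)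

(* Defs.v *)
From HB Require Import structures.
From mathcomp Require Import all_boot all_order all_algebra.
Set Implicit Arguments. Unset Strict Implicit. Unset Printing Implicit Defensive.
Import Order.TTheory GRing.Theory Num.Theory.
Local Open Scope ring_scope.

(* Conventions: a graded vector space is a K-module V together with a family
   G : int -> {pred V} of subspaces ("homogeneous elements of degree d") such
   that V is their internal direct sum.  An n-ary map is a function
   seq V -> V, used on lists of length n.  Indices [j] are 1-based nats. *)

Section Defs.
Variable K : fieldType.
Variable V : lmodType K.

Definition graded_space (G : int -> {pred V}) : Prop :=
  [/\ (forall d, 0 \in G d),
      (forall d (c : K) (x y : V), x \in G d -> y \in G d -> c *: x + y \in G d),
      (forall v : V, exists s : seq (int * V),
          all (fun p => p.2 \in G p.1) s /\ v = \sum_(p <- s) p.2) &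
      (forall s : seq (int * V), uniq (map fst s) ->
          all (fun p => p.2 \in G p.1) s -> \sum_(p <- s) p.2 = 0 ->
          all (fun p => p.2 == 0) s)].

Definition homog_seq (G : int -> {pred V}) (ds : seq int) (s : seq V) : bool :=
  all2 (fun a d => a \in G d) s ds.

Definition multilinear (n : nat) (f : seq V -> V) : Prop :=
  forall (s1 s2 : seq V) (c : K) (x y : V), (size s1 + size s2).+1 = n ->
    f (s1 ++ (c *: x + y) :: s2) = c *: f (s1 ++ x :: s2) + f (s1 ++ y :: s2).

Definition graded_map (G : int -> {pred V}) (n : nat) (d : int) (f : seq V -> V) : Prop :=
  multilinear n f /\
  forall (ds : seq int) (s : seq V), size ds = n -> homog_seq G ds s ->
    f s \in G (\sum_(x <- ds) x + d).

(* s with the block a_i..a_{i+n-1} (i 1-based) replaced by h(a_i..a_{i+n-1}) *)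
Definition insert_at (h : seq V -> V) (i n : nat) (s : seq V) : seq V :=
  take i.-1 s ++ h (take n (drop i.-1 s)) :: drop (i.-1 + n) s.

Definition degsum (ds : seq int) (i : nat) : int := \sum_(x <- take i.-1 ds) x.

Definition Ainf_algebra (G : int -> {pred V}) (mu : nat -> seq V -> V) : Prop :=
  (forall n : nat, (0 < n)%N -> graded_map G n (n%:Z - 2) (mu n)) /\
  forall (k : nat) (ds : seq int) (s : seq V), (0 < k)%N -> size ds = k ->
    homog_seq G ds s ->
    \sum_(1 <= m < k.+1) \sum_(1 <= i < m.+1)
       ((-1) ^ ((i * (k.+1 - m).+1)%N%:Z + (k.+1 - m)%N%:Z * degsum ds i)) *:
          mu m (insert_at (mu (k.+1 - m)%N) i (k.+1 - m) s) = 0.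

(* index set of O(n): C_1 if n = 1, C_{n+1} if n >= 2 *)
Definition idx (n j : nat) : bool :=
  if n == 1%N then j == 1%N else (1 <= j <= n.+1)%N.

(* An element of O(n) is represented by g : nat -> seq V -> V, g j = g([j]; -).
   ev enforces the convention g([j];-) = 0 for [j] outside the index set. *)
Definition ev (g : nat -> seq V -> V) (n j : nat) (s : seq V) : V :=
  if idx n j then g j s else 0.

Definition star (g : nat -> seq V -> V) (n : nat) (s : seq V) : V :=
  \sum_(1 <= j < n.+2 | idx n j) g j s.

(* (f o_i g)([r]; a_1,...,a_{m+n-1}) for f in O(m), g in O(n), degrees ds *)
Definition pcomp (f g : nat -> seq V -> V) (m n i r : nat)
    (ds : seq int) (s : seq V) : V :=
  let eps : K := (-1) ^ (n%:Z * degsum ds i) in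
  let ins h := insert_at h i n s in
  eps *: (if (r < i)%N then ev f m r (ins (star g n))
          else if (r < i + n)%N then ev f m i (ins (ev g n (r - i).+1))
          else if (r < m + n)%N then ev f m (r - n).+1 (ins (star g n))
          else if r == (m + n)%N then
            ev f m i (ins (ev g n n.+1)) + ev f m m.+1 (ins (star g n))
          else 0).

Definition NSinf_algebra (G : int -> {pred V}) (eta : nat -> nat -> seq V -> V) : Prop :=
  (forall n j : nat, (0 < n)%N -> idx n j -> graded_map G n (n%:Z - 2) (eta n j)) /\
  forall (k r : nat) (ds : seq int) (s : seq V), (0 < k)%N -> idx k r ->
    size ds = k -> homog_seq G ds s ->
    \sum_(1 <= m < k.+1) \sum_(1 <= i < m.+1)
       ((-1) ^ ((i * (k.+1 - m).+1)%N%:Z)) *: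
          pcomp (eta m) (eta (k.+1 - m)%N) m (k.+1 - m) i r ds s = 0.

Definition eta_bar (eta : nat -> nat -> seq V -> V) (n : nat) (s : seq V) : V :=
  star (eta n) n s.

End Defs.

(* Main.v *)
Require Import Defs.
From HB Require Import structures.
From mathcomp Require Import all_boot all_order all_algebra.
From mathcomp Require Import zify.
Import Order.TTheory GRing.Theory Num.Theory.
Local Open Scope ring_scope.

Section Helpers.
Variable K : fieldType.
Variable V : lmodType K.

Lemma ml_sum (m : nat) (h : seq V -> V) (s1 s2 : seq V) (I : Type) (r : seq I)
  (P : pred I) (F : I -> V) :
  multilinear m h -> (size s1 + size s2).+1 = m ->
  h (s1 ++ (\sum_(j <- r | P j) F j) :: s2) = \sum_(j <- r | P j) h (s1 ++ F j :: s2).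
Proof.
move=> H hs.
have add : forall x y, h (s1 ++ (x + y) :: s2) = h (s1 ++ x :: s2) + h (s1 ++ y :: s2).
  by move=> x y; have := H s1 s2 1 x y hs; rewrite !scale1r.
have z : h (s1 ++ 0 :: s2) = 0.
  have e := add 0 0; rewrite addr0 in e.
  by apply: (addrI (h (s1 ++ 0 :: s2))); rewrite addr0 -e.
exact: (big_morph (fun x => h (s1 ++ x :: s2)) add z).
Qed.

Lemma shift_sum (a n : nat) (F : nat -> V) :
  \sum_(a <= r < a + n) F r = \sum_(0 <= j < n) F (a + j)%N.
Proof.
elim: n => [|n IH]; first by rewrite addn0 !big_geq.
rewrite addnS !big_nat_recr //= ?IH //; lia.
Qed.


Lemma shift1 (n : nat) (F : nat -> V) :
  \sum_(1 <= j < n.+1) F j = \sum_(0 <= j < n) F (1 + j)%N.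
Proof. by rewrite -shift_sum add1n. Qed.

Lemma ml0 (m : nat) (h : seq V -> V) (s1 s2 : seq V) :
  multilinear m h -> (size s1 + size s2).+1 = m -> h (s1 ++ 0 :: s2) = 0.
Proof.
move=> H hs.
by have := @ml_sum m h s1 s2 unit [::] xpredT (fun _ => 0) H hs; rewrite !big_nil.
Qed.

Lemma starE (h : nat -> seq V -> V) (p : nat) (y : seq V) :
  star h p y = \sum_(1 <= j < p.+2) ev h p j y.
Proof. by rewrite /star big_mkcond. Qed.

Definition body (f g : nat -> seq V -> V) (m n i r : nat) (s : seq V) : V :=
  let ins h := insert_at h i n s in
  if (r < i)%N then ev f m r (ins (star g n))
  else if (r < i + n)%N then ev f m i (ins (ev g n (r - i).+1))
  else if (r < m + n)%N then ev f m (r - n).+1 (ins (star g n))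
  else if r == (m + n)%N then
    ev f m i (ins (ev g n n.+1)) + ev f m m.+1 (ins (star g n))
  else 0.

Lemma pcompE f g m n i r ds s :
  Defs.pcomp f g m n i r ds s = (-1) ^ (n%:Z * degsum ds i) *: body f g m n i r s.
Proof. by []. Qed.

Lemma addr_shuffle (a b c p q : V) :
  a + (b + (c + (p + q))) = a + ((b + p) + (c + q)).
Proof. by rewrite (addrCA c p q) (addrA b p). Qed.

Lemma key (f g : nat -> seq V -> V) (m n i k : nat) (ds : seq int) (s : seq V) :
  (0 < m)%N -> (0 < n)%N -> (1 <= i <= m)%N -> (m + n = k.+1)%N -> size s = k ->
  multilinear m (f i) ->
  \sum_(1 <= r < k.+2 | idx k r) Defs.pcomp f g m n i r ds s =
  (-1) ^ (n%:Z * degsum ds i) *: star f m (insert_at (star g n) i n s).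
Proof.
move=> m0 n0 /andP[i1 im] hk hs hf.
have hsz : (size (take i.-1 s) + size (drop (i.-1 + n) s)).+1 = m.
  rewrite size_drop size_takel; lia.
have hidx : idx m i by rewrite /idx; case: (m =P 1%N) => [e|e]; lia.
have fi : forall y, ev f m i y = f i y by move=> y; rewrite /ev hidx.
rewrite big_mkcond.
rewrite (eq_big_nat _ _ (F2 := fun r => Defs.pcomp f g m n i r ds s)); last first.
  move=> r /andP[r1 r2]; case: ifP => // hr.
  have k1 : k = 1%N by move: hr; rewrite /idx; case: (k =P 1%N) => [//|e]; lia.
  have [em en] : m = 1%N /\ n = 1%N by lia.
  have ei : i = 1%N by lia.
  have er : r = 2 by move: hr; rewrite /idx k1 /=; lia.
  move: hsz hf fi; rewrite em en ei er => hsz hf fi.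
  rewrite pcompE /body /=.
  have -> : forall y, ev f 1 2 y = 0 by [].
  have -> : ev g 1 2 = fun _ => 0 by [].
  by rewrite addr0 fi /insert_at (ml0 _ _ _ _ hf hsz) scaler0.
under eq_bigr => r _ do rewrite pcompE.
rewrite -scaler_sumr [star f m _]starE; congr (_ *: _).
set A := take i.-1 s. set B := drop (i.-1 + n) s. set T := take n (drop i.-1 s).
set S := star g n T.
have insE : forall h, insert_at h i n s = A ++ h T :: B by [].
rewrite insE -hk.
rewrite (big_cat_nat _ (m := 1%N) (n := i) (p := (m + n).+1)) //; last lia.
rewrite (big_cat_nat _ (m := i) (n := i + n) (p := (m + n).+1)) //; [|lia|lia].
rewrite (big_cat_nat _ (m := i + n) (n := m + n) (p := (m + n).+1)) //; last lia.
rewrite big_nat1.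
rewrite (big_cat_nat _ (m := 1%N) (n := i) (p := m.+2)) //; last lia.
rewrite (big_cat_nat _ (m := i) (n := i.+1) (p := m.+2)) //; last lia.
rewrite (big_cat_nat _ (m := i.+1) (n := m.+1) (p := m.+2)); [|exact: im|by []].
rewrite !big_nat1.
have E1 : \sum_(1 <= r < i) body f g m n i r s = \sum_(1 <= j < i) ev f m j (A ++ S :: B).
  by apply: eq_big_nat => r /andP[_ h]; rewrite /body h.
have E2 : \sum_(i <= r < i + n) body f g m n i r s =
          \sum_(1 <= j < n.+1) f i (A ++ ev g n j T :: B).
  rewrite shift_sum shift1; apply: eq_big_nat => j /andP[_ hj].
  rewrite /body.
  have -> : (i + j < i)%N = false by lia.
  have -> : (i + j < i + n)%N = true by lia.
  by rewrite fi addKn add1n.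
have E3 : \sum_(i + n <= r < m + n) body f g m n i r s =
          \sum_(i.+1 <= j < m.+1) ev f m j (A ++ S :: B).
  have -> : (m + n = (i + n) + (m - i))%N by lia.
  have -> : (m.+1 = i.+1 + (m - i))%N by lia.
  rewrite (shift_sum (i + n)) (shift_sum i.+1); apply: eq_big_nat => j /andP[_ hj].
  rewrite /body.
  have -> : (i + n + j < i)%N = false by lia.
  have -> : (i + n + j < i + n)%N = false by lia.
  have -> : (i + n + j < m + n)%N = true by lia.
  by have -> : (i + n + j - n).+1 = (i.+1 + j)%N by lia.
have EX : body f g m n i (m + n) s = f i (A ++ ev g n n.+1 T :: B) + ev f m m.+1 (A ++ S :: B).
  rewrite /body.
  have -> : (m + n < i)%N = false by lia.
  have -> : (m + n < i + n)%N = false by lia.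
  by rewrite ltnn eqxx fi.
have ER : ev f m i (A ++ S :: B) =
          \sum_(1 <= j < n.+1) f i (A ++ ev g n j T :: B) + f i (A ++ ev g n n.+1 T :: B).
  by rewrite fi /S starE (ml_sum _ _ _ _ _ _ _ _ hf hsz) big_nat_recr.
rewrite E1 E2 E3 EX ER /=; exact: addr_shuffle.
Qed.

End Helpers.

Theorem proposition6p13 (K : fieldType) (hchar : [pchar K] =i pred0)
    (V : lmodType K) (G : int -> {pred V}) (eta : nat -> nat -> seq V -> V) :
  graded_space G -> NSinf_algebra G eta -> Ainf_algebra G (eta_bar eta).
Proof.
move=> hG [Hgr Hid]; split.
  move=> n n0; split.
    move=> s1 s2 c x y hs.
    rewrite /eta_bar /star scaler_sumr -big_split /=.
    apply: eq_bigr => j hj.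
    exact: ((Hgr n j n0 hj).1 s1 s2 c x y hs).
  move=> ds s hds hh.
  rewrite /eta_bar /star.
  case: hG => [h0 hlin _ _].
  apply: (big_ind (fun x => x \in G (\sum_(x <- ds) x + (n%:Z - 2)))) => [|x y hx hy|j hj].
  - exact: h0.
  - by have := hlin _ 1 x y hx hy; rewrite scale1r.
  - exact: ((Hgr n j n0 hj).2 ds s hds hh).
move=> k ds s k0 hds hh.
have hs : size s = k.
  by move: hh; rewrite /homog_seq all2E => /andP[/eqP -> _].
transitivity (\sum_(1 <= r < k.+2 | idx k r) \sum_(1 <= m < k.+1) \sum_(1 <= i < m.+1)
  ((-1) ^ ((i * (k.+1 - m).+1)%N%:Z)) *:
     Defs.pcomp (eta m) (eta (k.+1 - m)%N) m (k.+1 - m) i r ds s); last first.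
  by apply: big1 => r hr; apply: Hid.
rewrite [RHS]exchange_big; apply: eq_big_nat => m /andP[m1 mk].
rewrite [RHS]exchange_big; apply: eq_big_nat => i /andP[i1 im].
have hidx : idx m i by rewrite /idx; case: (m =P 1%N) => [e|e]; lia.
have m0 : (0 < m)%N by [].
have ml := (Hgr m i m0 hidx).1.
have n0 : (0 < k.+1 - m)%N by lia.
have hi : (1 <= i <= m)%N by lia.
have hmn : (m + (k.+1 - m) = k.+1)%N by lia.
rewrite -scaler_sumr (@key K V (eta m) (eta (k.+1 - m)%N) m (k.+1 - m) i k ds s m0 n0 hi hmn hs ml).
rewrite scalerA -expfzDr //.
by rewrite oppr_eq0 oner_eq0.
Qed.
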